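(* For every $\epsilon>0$ and $K>0$ there is $\delta>0$ such that the following holds. Let $\mathbb{A},\mathbb{A}'$ be round cylinders in $\hat{\mathbb{C}}$ and $R,R'$ projective rectangles supported on $\mathbb{A},\mathbb{A}'$ respectively, with canonical Euclidean metrics $E,E'$, and let $\xi\colon R\to R'$ be the canonical linear map. Suppose (1) $R$ and $R'$ are $(\delta,K)$-nearly circular; (2) the lengths of the cores of $\mathbb{A}$ and $\mathbb{A}'$ differ by less than $\delta$; (3) there are constants $V,V'>1/\delta$ with $-K/2<V-V'<K/2$ such that for all vertical leaves $\ell$ of $R$ and $\ell'$ of $R'$, $$-\delta<\mathrm{length}_E(\ell)-V<\delta,\qquad -\delta<\mathrm{length}_{E'}(\ell')-V'<\delta.$$ Then $\xi\colon R\to R'$ is a smooth $(1+\epsilon,K)$-bilipschitz map.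
   Context: A round cylinder $\mathbb{A}\subset\hat{\mathbb{C}}$ is an annulus bounded by two disjoint round circles; its axis is the geodesic of $\mathbb{H}^3$ orthogonal to the two hyperbolic planes bounded by these circles; its core is the segment of the axis between these planes; its vertical foliation is by round circles bounding planes orthogonal to the axis. The canonical Euclidean metric on $\mathbb{A}$ is induced from the flat metric on $\hat{\mathbb{C}}$ minus the endpoints of the axis (a biinfinite Euclidean cylinder), normalized so that vertical circles have length $2\pi$. A projective structure on a rectangle $R$ (with chosen horizontal and vertical edges) is supported on $\mathbb{A}$ if its developing map maps into $\mathbb{A}$, the horizontal edges are arcs properly embedded in $\mathbb{A}$ transverse to the vertical foliation and joining the boundary circles, and the vertical edges immerse into the boundary circles; $R$ inherits by pullback the vertical foliation (whose leaves are the vertical leaves) and the Euclidean metric. A circular rectangle supported on $\mathbb{A}$ has horizontal edges orthogonal to the vertical foliation. A supported arc is $\delta$-nearly circular if it is contained in a circular rectangle of height at most $\delta$ and meets each vertical leaf at an angle $\delta$-close to $\pi/2$. $R$ is $(\delta,K)$-nearly circular if the core of $\mathbb{A}$ has length at least $K$ and each horizontal edge of $R$ is $\delta$-nearly circular. The canonical linear map $\xi\colon R\to R'$ is the unique diffeomorphism preserving the left and right vertical edges and the horizontal edges, mapping each vertical leaf of $R$ linearly (with respect to the Euclidean metrics) onto a vertical leaf of $R'$, and such that the induced map on horizontal coordinates is linear. A map is $A$-bilipschitz if $\frac1A d(p,q)<d(\phi(p),\phi(q))<A\,d(p,q)$, a $B$-rough isometry if $d(p,q)-B<d(\phi(p),\phi(q))<d(p,q)+B$,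 and $(A,B)$-bilipschitz if both hold (and it is piecewise differentiable). *)

(* Defs.v *)
From Stdlib Require Import Reals Lra Sorting.Sorted List.
From Coquelicot Require Import Coquelicot.
Import ListNotations.
Open Scope R_scope.

(* A round cylinder whose core has length L is Moebius-equivalent to   *)
(* the annulus {1 <= |z| <= e^L}; in log coordinates z = e^(t + i th)  *)
(* its canonical Euclidean metric is dt^2 + dth^2 (vertical circles    *)
(* t = const have length 2 pi), and the core length is L.              *)
(* A projective rectangle supported on it, after lifting the           *)
(* developing map to the universal cover [0,L] x R of the annulus, is  *)
(* the region { (t,th) | 0 <= t <= L, f t <= th <= g t } where the     *)
(* bottom/top horizontal edges are the graphs of f < g, the left/right *)
(* vertical edges lie on t = 0 and t = L, and the vertical leaves are  *)
(* the segments {t} x [f t, g t].                        *)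

Definition smooth1 (h : R -> R) : Prop := forall (n : nat) (x : R), ex_derive_n h n x.

Definition region (L : R) (f g : R -> R) (p : R * R) : Prop :=
  0 <= fst p <= L /\ f (fst p) <= snd p <= g (fst p).

Definition eucl (p q : R * R) : R :=
  sqrt ((fst p - fst q) ^ 2 + (snd p - snd q) ^ 2).

Fixpoint poly_len (gam : R -> R * R) (l : list R) : R :=
  match l with
  | a :: ((b :: _) as l') => eucl (gam a) (gam b) + poly_len gam l'
  | _ => 0
  end.

Definition path_le (Omega : R * R -> Prop) (p q : R * R) (M : R) : Prop :=
  exists gam : R -> R * R,
    (forall s, continuous gam s) /\ gam 0 = p /\ gam 1 = q /\
    (forall s, 0 <= s <= 1 -> Omega (gam s)) /\
    (forall l : list R, Sorted Rle l -> List.Forall (fun s => 0 <= s <= 1) l ->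
        poly_len gam l <= M).

Definition pdist (Omega : R * R -> Prop) (p q : R * R) : R :=
  real (Glb_Rbar (fun M => path_le Omega p q M)).

(* iterated partial derivatives: true = d/dt, false = d/dth *)
Fixpoint iterp (ds : list bool) (F : R * R -> R) : R * R -> R :=
  match ds with
  | nil => F
  | b :: ds' =>
      let G := iterp ds' F in
      if b then fun p => Derive (fun t => G (t, snd p)) (fst p)
      else fun p => Derive (fun s => G (fst p, s)) (snd p)
  end.

Definition Cinf2 (U : R * R -> Prop) (F : R * R -> R) : Prop :=
  forall (ds : list bool) (p : R * R), U p ->
    continuous (iterp ds F) p /\
    ex_derive (fun t => iterp ds F (t, snd p)) (fst p) /\
    ex_derive (fun s => iterp ds F (fst p, s)) (snd p).

Definition smooth_map (Omega : R * R -> Prop) (phi : R * R -> R * R) : Prop :=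
  exists U : R * R -> Prop, open U /\ (forall p, Omega p -> U p) /\
    Cinf2 U (fun p => fst (phi p)) /\ Cinf2 U (fun p => snd (phi p)).

Definition nearly_circular_arc (delta L : R) (h : R -> R) : Prop :=
  (exists c ht, 0 < ht <= delta /\ forall t, 0 <= t <= L -> c <= h t <= c + ht) /\
  (* angle between (1, h' t) and the vertical leaf direction (0,1) is
     pi/2 - atan (h' t) *)
  (forall t, 0 <= t <= L -> Rabs (PI / 2 - (PI / 2 - atan (Derive h t))) < delta).

Definition nearly_circular_rect (delta K L : R) (f g : R -> R) : Prop :=
  K <= L /\ nearly_circular_arc delta L f /\ nearly_circular_arc delta L g.

Definition canon_xi (L : R) (f g : R -> R) (L' : R) (f' g' : R -> R)
    (p : R * R) : R * R :=
  let t := fst p in let th := snd p in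
  let t' := t * L' / L in
  (t', f' t' + (th - f t) * (g' t' - f' t') / (g t - f t)).

Definition bilip (A B : R) (Om Om' : R * R -> Prop) (phi : R * R -> R * R) : Prop :=
  (forall p q, Om p -> Om q -> p <> q ->
     / A * pdist Om p q < pdist Om' (phi p) (phi q) /\
     pdist Om' (phi p) (phi q) < A * pdist Om p q) /\
  (forall p q, Om p -> Om q ->
     pdist Om p q - B < pdist Om' (phi p) (phi q) /\
     pdist Om' (phi p) (phi q) < pdist Om p q + B).

(* Main.v *)
Require Import Defs.
From Stdlib Require Import Reals.
From Coquelicot Require Import Coquelicot.
From Stdlib Require Import Lra Psatz Sorting.Sorted List.
Import ListNotations.
Open Scope R_scope.

Definition n2 (x y : R) := sqrt (x ^ 2 + y ^ 2).

Lemma eucl_n2 p q : eucl p q = n2 (fst p - fst q) (snd p - snd q).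
Proof. reflexivity. Qed.

Lemma n2_ge0 x y : 0 <= n2 x y.
Proof. apply sqrt_pos. Qed.

Lemma n2_sq x y : n2 x y * n2 x y = x ^ 2 + y ^ 2.
Proof. unfold n2. rewrite sqrt_sqrt; nra. Qed.

Lemma n2_le_of_sq x y a : 0 <= a -> x ^ 2 + y ^ 2 <= a * a -> n2 x y <= a.
Proof.
  intros Ha H. unfold n2. rewrite <- (sqrt_square a Ha). apply sqrt_le_1_alt. exact H.
Qed.

Lemma n2_tri a b c d : n2 (a + c) (b + d) <= n2 a b + n2 c d.
Proof.
  pose proof (n2_sq a b). pose proof (n2_sq c d).
  pose proof (n2_ge0 a b). pose proof (n2_ge0 c d).
  apply n2_le_of_sq; [lra|].
  assert (a * c + b * d <= n2 a b * n2 c d).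
  { assert ((n2 a b * n2 c d) ^ 2 - (a*c+b*d)^2 = (a*d - b*c)^2).
    { replace ((n2 a b * n2 c d) ^ 2) with ((n2 a b * n2 a b) * (n2 c d * n2 c d)) by ring.
      rewrite H, H0. ring. }
    assert (0 <= n2 a b * n2 c d) by nra.
    set (X := n2 a b * n2 c d) in *. set (Y := a*c+b*d) in *.
    destruct (Rle_dec Y X) as [|Hn]; auto. apply Rnot_le_lt in Hn.
    clearbody X Y.
    assert (X*X < Y*Y) by (apply Rmult_le_0_lt_compat; lra).
    assert (0 <= (a*d-b*c)^2) by (apply pow2_ge_0). exfalso. lra. }
  nra.
Qed.

Lemma n2_abs_le x y : Rabs x <= n2 x y /\ Rabs y <= n2 x y.
Proof.
  pose proof (n2_sq x y). pose proof (n2_ge0 x y).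
  split; apply Rabs_le; split; nra.
Qed.

Lemma n2_le_sum x y : n2 x y <= Rabs x + Rabs y.
Proof.
  apply n2_le_of_sq. pose proof (Rabs_pos x); pose proof (Rabs_pos y); lra.
  pose proof (Rabs_pos x); pose proof (Rabs_pos y).
  assert (x^2 = Rabs x * Rabs x) by (rewrite <- Rabs_mult; simpl; rewrite Rmult_1_r; rewrite Rabs_right; nra).
  assert (y^2 = Rabs y * Rabs y) by (rewrite <- Rabs_mult; simpl; rewrite Rmult_1_r; rewrite Rabs_right; nra).
  nra.
Qed.

Lemma n2_scale k x y : 0 <= k -> n2 (k * x) (k * y) = k * n2 x y.
Proof.
  intros Hk. unfold n2.
  replace ((k*x)^2 + (k*y)^2) with (k^2 * (x^2+y^2)) by ring.
  rewrite sqrt_mult; [|nra|nra]. rewrite sqrt_pow2; auto.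
Qed.

Lemma n2_add_err x y x' y' : n2 x' y' <= n2 x y + Rabs (x' - x) + Rabs (y' - y).
Proof.
  replace x' with (x + (x' - x)) at 1 by ring. replace y' with (y + (y'-y)) at 1 by ring.
  pose proof (n2_tri x y (x'-x) (y'-y)). pose proof (n2_le_sum (x'-x) (y'-y)). lra.
Qed.


Lemma n2_opp x y : n2 (- x) (- y) = n2 x y.
Proof. unfold n2. f_equal. ring. Qed.

Lemma n2_0l x : n2 0 x = Rabs x.
Proof. unfold n2. replace (0 ^ 2 + x ^ 2) with (Rsqr x) by (unfold Rsqr; ring). apply sqrt_Rsqr_abs. Qed.


Lemma poly_len_tele (gam : R -> R * R) (ell : R -> R) :
  (forall x y, 0 <= x -> x <= y -> y <= 1 -> eucl (gam x) (gam y) <= ell y - ell x) ->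
  (forall x y, 0 <= x -> x <= y -> y <= 1 -> ell x <= ell y) ->
  forall l, Sorted Rle l -> List.Forall (fun s => 0 <= s <= 1) l ->
  poly_len gam l <= ell 1 - ell 0.
Proof.
  intros He Hm.
  assert (Aux : forall l a, Sorted Rle (a :: l) -> List.Forall (fun s => 0 <= s <= 1) (a :: l) ->
            poly_len gam (a :: l) <= ell 1 - ell a).
  { induction l as [|b l IH]; intros a Hs Hf.
    - simpl. inversion Hf; subst. assert (ell a <= ell 1) by (apply Hm; lra). lra.
    - inversion Hs as [|? ? Hs1 Hh]; subst. inversion Hh as [|? ? Hab]; subst.
      inversion Hf as [|? ? Ha Hf1]; subst. inversion Hf1 as [|? ? Hb Hf2]; subst.
      change (poly_len gam (a :: b :: l)) with (eucl (gam a) (gam b) + poly_len gam (b :: l)).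
      specialize (IH b Hs1 Hf1). assert (eucl (gam a) (gam b) <= ell b - ell a) by (apply He; lra).
      lra. }
  intros [|a l] Hs Hf.
  - simpl. assert (ell 0 <= ell 1) by (apply Hm; lra). lra.
  - inversion Hf; subst. assert (ell 0 <= ell a) by (apply Hm; lra).
    pose proof (Aux l a Hs Hf). lra.
Qed.

Lemma path_le_eucl Om p q M : path_le Om p q M -> eucl p q <= M.
Proof.
  intros (gam & Hc & H0 & H1 & Hin & Hl).
  specialize (Hl [0; 1]). simpl in Hl. rewrite H0, H1 in Hl.
  assert (Sorted Rle [0; 1]) by (repeat constructor; lra).
  assert (List.Forall (fun s => 0 <= s <= 1) [0;1]) by (repeat constructor; lra).
  specialize (Hl H H2). lra.
Qed.

Lemma glb_finite Om p q : (exists M, path_le Om p q M) ->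
  Glb_Rbar (fun M => path_le Om p q M) = Finite (pdist Om p q).
Proof.
  intros [M0 HM0]. unfold pdist.
  destruct (Glb_Rbar_correct (fun M => path_le Om p q M)) as [Hlb Hgr].
  specialize (Hlb M0 HM0).
  assert (Hb : Rbar_le (Finite (eucl p q)) (Glb_Rbar (fun M => path_le Om p q M))).
  { apply Hgr. intros x Hx. simpl. apply (path_le_eucl _ _ _ _ Hx). }
  destruct (Glb_Rbar (fun M => path_le Om p q M)); simpl in *; auto; contradiction.
Qed.

Lemma pdist_le Om p q M : path_le Om p q M -> pdist Om p q <= M.
Proof.
  intros H. assert (E := glb_finite Om p q (ex_intro _ M H)).
  destruct (Glb_Rbar_correct (fun M => path_le Om p q M)) as [Hlb Hgr].
  specialize (Hlb M H). rewrite E in Hlb. exact Hlb.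
Qed.

Lemma pdist_ge Om p q b : (exists M, path_le Om p q M) ->
  (forall M, path_le Om p q M -> b <= M) -> b <= pdist Om p q.
Proof.
  intros Hex H. assert (E := glb_finite Om p q Hex).
  destruct (Glb_Rbar_correct (fun M => path_le Om p q M)) as [Hlb Hgr].
  assert (Rbar_le (Finite b) (Glb_Rbar (fun M => path_le Om p q M))).
  { apply Hgr. intros x Hx. simpl. auto. }
  rewrite E in H0. exact H0.
Qed.

Lemma pdist_ge_eucl Om p q : (exists M, path_le Om p q M) -> eucl p q <= pdist Om p q.
Proof. intros H. apply pdist_ge; auto. intros M HM. apply (path_le_eucl _ _ _ _ HM). Qed.

Lemma cont_pair (u v : R -> R) s : continuous u s -> continuous v s ->
  continuous (fun s => (u s, v s)) s.
Proof.
  intros Hu Hv.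
  apply (continuous_comp_2 u v (fun a b => (a, b))); auto.
  apply continuous_ext with (f := fun x : R * R => x).
  - intros [a b]; reflexivity.
  - apply continuous_id.
Qed.

Lemma cont_fst_comp (gam : R -> R * R) s : continuous gam s -> continuous (fun s => fst (gam s)) s.
Proof.
  intros H. apply (continuous_comp gam fst); auto.
  destruct (gam s). apply continuous_fst.
Qed.

Lemma cont_snd_comp (gam : R -> R * R) s : continuous gam s -> continuous (fun s => snd (gam s)) s.
Proof.
  intros H. apply (continuous_comp gam snd); auto.
  destruct (gam s). apply continuous_snd.
Qed.

Definition clamp01 (x : R) := (Rabs x - Rabs (x - 1) + 1) / 2.

Lemma clamp01_cont x : continuous clamp01 x.
Proof.
  unfold clamp01.
  apply continuous_mult with (f := fun x => Rabs x - Rabs (x-1) + 1) (g := fun _ => / 2).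
  2: apply continuous_const.
  apply (continuous_plus (fun x => Rabs x - Rabs (x-1)) (fun _ => 1)).
  2: apply continuous_const.
  apply (continuous_plus (fun x => Rabs x) (fun x => - Rabs (x-1))).
  apply continuous_Rabs.
  apply (continuous_opp (fun x => Rabs (x-1))).
  apply continuous_Rabs_comp.
  apply (continuous_plus (fun x => x) (fun _ => -1)). apply continuous_id. apply continuous_const.
Qed.

Lemma clamp01_id x : 0 <= x <= 1 -> clamp01 x = x.
Proof.
  intros H. unfold clamp01. rewrite (Rabs_right x) by lra. rewrite (Rabs_left1 (x-1)) by lra. field.
Qed.

Lemma clamp01_range x : 0 <= clamp01 x <= 1.
Proof.
  unfold clamp01. destruct (Rle_dec x 0); destruct (Rle_dec x 1).
  - rewrite (Rabs_left1 x) by lra. rewrite (Rabs_left1 (x-1)) by lra. lra.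
  - lra.
  - rewrite (Rabs_right x) by lra. rewrite (Rabs_left1 (x-1)) by lra. lra.
  - rewrite (Rabs_right x) by lra. rewrite (Rabs_right (x-1)) by lra. lra.
Qed.

Lemma clamp01_mono x y : x <= y -> clamp01 x <= clamp01 y.
Proof.
  intros H. unfold clamp01.
  destruct (Rle_dec x 0); destruct (Rle_dec x 1); destruct (Rle_dec y 0); destruct (Rle_dec y 1);
  try lra;
  repeat first [ rewrite (Rabs_left1 x) by lra | rewrite (Rabs_right x) by lra
               | rewrite (Rabs_left1 y) by lra | rewrite (Rabs_right y) by lra
               | rewrite (Rabs_left1 (x-1)) by lra | rewrite (Rabs_right (x-1)) by lra
               | rewrite (Rabs_left1 (y-1)) by lra | rewrite (Rabs_right (y-1)) by lra ]; lra.
Qed.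

Inductive ex : Type :=
 | Cst (c : R) | Vt | Vs | Ap (h : R -> R) (e : ex) | Ad (e1 e2 : ex) | Sb (e1 e2 : ex) | Mu (e1 e2 : ex) | Iv (e : ex).

Fixpoint den (e : ex) (p : R * R) : R :=
  match e with
  | Cst c => c
  | Vt => fst p
  | Vs => snd p
  | Ap h e => h (den e p)
  | Ad e1 e2 => den e1 p + den e2 p
  | Sb e1 e2 => den e1 p - den e2 p
  | Mu e1 e2 => den e1 p * den e2 p
  | Iv e => / den e p
  end.

Fixpoint dd (b : bool) (e : ex) : ex :=
  match e with
  | Cst _ => Cst 0
  | Vt => Cst (if b then 1 else 0)
  | Vs => Cst (if b then 0 else 1)
  | Ap h e => Mu (Ap (Derive h) e) (dd b e)
  | Ad e1 e2 => Ad (dd b e1) (dd b e2)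
  | Sb e1 e2 => Sb (dd b e1) (dd b e2)
  | Mu e1 e2 => Ad (Mu (dd b e1) e2) (Mu e1 (dd b e2))
  | Iv e => Mu (Cst (-1)) (Mu (dd b e) (Mu (Iv e) (Iv e)))
  end.

Fixpoint wf (U : R * R -> Prop) (e : ex) : Prop :=
  match e with
  | Cst _ | Vt | Vs => True
  | Ap h e => smooth1 h /\ wf U e
  | Ad e1 e2 | Sb e1 e2 | Mu e1 e2 => wf U e1 /\ wf U e2
  | Iv e => wf U e /\ forall p, U p -> den e p <> 0
  end.

Lemma smooth1_Derive h : smooth1 h -> smooth1 (Derive h).
Proof.
  intros H n x. destruct n as [|n]; simpl; auto.
  specialize (H (S (S n)) x). simpl in H.
  eapply ex_derive_ext; [|exact H].
  intros y. simpl. change (Derive h) with (Derive_n h 1).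
  rewrite Derive_n_comp. now rewrite Nat.add_1_r.
Qed.

Lemma smooth1_ex_derive h x : smooth1 h -> ex_derive h x.
Proof. intros H. exact (H 1%nat x). Qed.

Lemma smooth1_cont h x : smooth1 h -> continuous h x.
Proof. intros H. apply (ex_derive_continuous (K := R_AbsRing) (V := R_NormedModule) h). now apply smooth1_ex_derive. Qed.

Lemma wf_dd U b e : wf U e -> wf U (dd b e).
Proof.
  induction e; simpl; intros; try destruct b; simpl; intuition auto using smooth1_Derive.
Qed.

Lemma den_cont (U : R * R -> Prop) (e : ex) (p : R * R) : wf U e -> U p -> continuous (den e) p.
Proof.
  intros Hw Hp. induction e; simpl in *.
  - apply continuous_const.
  - destruct p; apply continuous_fst.
  - destruct p; apply continuous_snd.
  - destruct Hw as [Hh Hw]. apply (continuous_comp (den e) h). auto. now apply smooth1_cont.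
  - destruct Hw. apply (continuous_plus (den e1) (den e2)); auto.
  - destruct Hw. apply (continuous_minus (den e1) (den e2)); auto.
  - destruct Hw. apply (continuous_mult (den e1) (den e2)); auto.
  - destruct Hw as [Hw Hn]. apply (continuous_comp (den e) Rinv); auto. apply continuous_Rinv. auto.
Qed.

Lemma den_deriv (U : R * R -> Prop) (b : bool) (e : ex) (p : R * R) : wf U e -> U p ->
  is_derive (fun s : R => den e (if b then (s, snd p) else (fst p, s)))
    (if b then fst p else snd p) (den (dd b e) p).
Proof.
  intros Hw Hp. induction e; simpl in *.
  - exact (is_derive_const (K:=R_AbsRing) (V:=R_NormedModule) c _).
  - destruct b; simpl. exact (is_derive_id (K:=R_AbsRing) _). exact (is_derive_const (K:=R_AbsRing) (V:=R_NormedModule) _ _).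
  - destruct b; simpl. exact (is_derive_const (K:=R_AbsRing) (V:=R_NormedModule) _ _). exact (is_derive_id (K:=R_AbsRing) _).
  - destruct Hw as [Hh Hw].
    assert (E : den e (if b then (if b then fst p else snd p, snd p) else (fst p, if b then fst p else snd p)) = den e p).
    { destruct b, p; reflexivity. }
    eapply is_derive_ext. intros; reflexivity.
    replace (Derive h (den e p) * den (dd b e) p) with (scal (den (dd b e) p) (Derive h (den e p))).
    2:{ rewrite Rmult_comm; reflexivity. }
    apply (is_derive_comp h). rewrite E. apply Derive_correct. now apply smooth1_ex_derive.
    auto.
  - destruct Hw. apply (is_derive_plus (fun s => den e1 _) (fun s => den e2 _)); auto.
  - destruct Hw. apply (is_derive_minus (fun s => den e1 _) (fun s => den e2 _)); auto.
  - destruct Hw.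
    assert (E : forall e, den e (if b then (if b then fst p else snd p, snd p) else (fst p, if b then fst p else snd p)) = den e p).
    { destruct b, p; reflexivity. }
    pose proof (is_derive_mult (fun s => den e1 (if b then (s, snd p) else (fst p, s)))
                  (fun s => den e2 (if b then (s, snd p) else (fst p, s))) _ _ _ (IHe1 H) (IHe2 H0)) as K.
    cbv beta in K. rewrite !E in K. apply K. intros; apply Rmult_comm.
  - destruct Hw as [Hw Hn].
    assert (E : forall e, den e (if b then (if b then fst p else snd p, snd p) else (fst p, if b then fst p else snd p)) = den e p).
    { destruct b, p; reflexivity. }
    pose proof (is_derive_inv _ _ _ (IHe Hw)) as K. cbv beta in K. rewrite E in K.
    specialize (K (Hn p Hp)).
    eapply is_derive_ext. intros; reflexivity.
    replace (-1 * (den (dd b e) p * (/ den e p * / den e p))) with (- den (dd b e) p / den e p ^ 2).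
    exact K. field. auto.
Qed.

Fixpoint DD (ds : list bool) (e : ex) : ex :=
  match ds with nil => e | b :: ds' => dd b (DD ds' e) end.

Lemma wf_DD U ds e : wf U e -> wf U (DD ds e).
Proof. induction ds; simpl; auto using wf_dd. Qed.

Lemma loc_t (U : R * R -> Prop) p : open U -> U p -> locally (fst p) (fun t => U (t, snd p)).
Proof.
  intros Ho Hp. destruct (Ho p Hp) as [eps He]. exists eps. intros y Hy.
  apply He. destruct p. split; simpl; auto. apply ball_center.
Qed.

Lemma loc_s (U : R * R -> Prop) p : open U -> U p -> locally (snd p) (fun s => U (fst p, s)).
Proof.
  intros Ho Hp. destruct (Ho p Hp) as [eps He]. exists eps. intros y Hy.
  apply He. destruct p. split; simpl; auto. apply ball_center.
Qed.

Lemma iterp_den U e ds : open U -> wf U e -> forall p, U p -> iterp ds (den e) p = den (DD ds e) p.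
Proof.
  intros Ho Hw. induction ds as [|b ds IH]; intros p Hp; simpl; auto.
  destruct b.
  - rewrite (Derive_ext_loc _ (fun t => den (DD ds e) (t, snd p))).
    + apply is_derive_unique. apply (den_deriv U true). apply wf_DD; auto. auto.
    + generalize (loc_t U p Ho Hp). apply filter_imp. intros t Ht. apply IH; auto.
  - rewrite (Derive_ext_loc _ (fun s => den (DD ds e) (fst p, s))).
    + apply is_derive_unique. apply (den_deriv U false). apply wf_DD; auto. auto.
    + generalize (loc_s U p Ho Hp). apply filter_imp. intros t Ht. apply IH; auto.
Qed.

Lemma Cinf2_den U e : open U -> wf U e -> Cinf2 U (den e).
Proof.
  intros Ho Hw ds p Hp. split; [|split].
  - apply continuous_ext_loc with (g := den (DD ds e)).
    + generalize (Ho p Hp). apply filter_imp. intros q Hq. symmetry. apply (iterp_den U); auto.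
    + apply (den_cont U); auto. apply wf_DD; auto.
  - apply ex_derive_ext_loc with (f := fun t => den (DD ds e) (t, snd p)).
    + generalize (loc_t U p Ho Hp). apply filter_imp. intros t Ht. symmetry. apply (iterp_den U); auto.
    + eexists. apply (den_deriv U true (DD ds e) p). apply wf_DD; auto. auto.
  - apply ex_derive_ext_loc with (f := fun s => den (DD ds e) (fst p, s)).
    + generalize (loc_s U p Ho Hp). apply filter_imp. intros t Ht. symmetry. apply (iterp_den U); auto.
    + eexists. apply (den_deriv U false (DD ds e) p). apply wf_DD; auto. auto.
Qed.

Definition e1x (L L' : R) := Mu (Mu Vt (Cst L')) (Iv (Cst L)).
Definition e2x (L : R) (f g : R -> R) (L' : R) (f' g' : R -> R) :=
  Ad (Ap f' (e1x L L'))
     (Mu (Mu (Sb Vs (Ap f Vt)) (Sb (Ap g' (e1x L L')) (Ap f' (e1x L L'))))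
         (Iv (Sb (Ap g Vt) (Ap f Vt)))).

Lemma xi_fst L f g L' f' g' : (fun p => fst (canon_xi L f g L' f' g' p)) = den (e1x L L').
Proof. reflexivity. Qed.
Lemma xi_snd L f g L' f' g' : (fun p => snd (canon_xi L f g L' f' g' p)) = den (e2x L f g L' f' g').
Proof. reflexivity. Qed.

Definition Ux (f g : R -> R) := fun p : R * R => 0 < g (fst p) - f (fst p).

Lemma Ux_open f g : smooth1 f -> smooth1 g -> open (Ux f g).
Proof.
  intros Hf Hg p Hp. unfold Ux in Hp.
  assert (Hc : continuous (fun t => g t - f t) (fst p)).
  { apply (continuous_minus g f); apply smooth1_cont; auto. }
  assert (Hl : locally (g (fst p) - f (fst p)) (fun y => 0 < y)).
  { exists (mkposreal _ Hp). intros y Hy. simpl in Hy. unfold ball in Hy; simpl in Hy.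
    unfold AbsRing_ball, abs, minus, plus, opp in Hy; simpl in Hy.
    apply Rabs_lt_between in Hy. lra. }
  destruct (Hc _ Hl) as [eps He]. exists eps. intros q Hq. destruct p as [a b], q as [c d].
  destruct Hq as [Hq1 Hq2]. unfold Ux. simpl. apply (He c Hq1).
Qed.

Lemma wf_e1 L L' f g : L <> 0 -> wf (Ux f g) (e1x L L').
Proof. intros H. simpl. repeat split; auto. Qed.

Lemma wf_e2 L f g L' f' g' : L <> 0 -> smooth1 f -> smooth1 g -> smooth1 f' -> smooth1 g' ->
  wf (Ux f g) (e2x L f g L' f' g').
Proof.
  intros H Hf Hg Hf' Hg'. simpl. unfold Ux. repeat split; auto.
  intros p Hp. simpl. lra.
Qed.

Lemma cont_pair2 (u v : R * R -> R) p : continuous u p -> continuous v p ->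
  continuous (fun p => (u p, v p)) p.
Proof.
  intros Hu Hv.
  apply (continuous_comp_2 u v (fun a b => (a, b))); auto.
  apply continuous_ext with (f := fun x : R * R => x).
  - intros [a b]; reflexivity.
  - apply continuous_id.
Qed.

Lemma xi_cont L f g L' f' g' p : L <> 0 -> smooth1 f -> smooth1 g -> smooth1 f' -> smooth1 g' ->
  Ux f g p -> continuous (canon_xi L f g L' f' g') p.
Proof.
  intros H Hf Hg Hf' Hg' Hp.
  apply continuous_ext with (f := fun p => (fst (canon_xi L f g L' f' g' p), snd (canon_xi L f g L' f' g' p))).
  { intros q. destruct (canon_xi L f g L' f' g' q); reflexivity. }
  apply cont_pair2.
  - rewrite xi_fst. apply (den_cont (Ux f g)); auto. apply wf_e1; auto.
  - rewrite xi_snd. apply (den_cont (Ux f g)); auto. apply wf_e2; auto.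
Qed.

Lemma xi_smooth L f g L' f' g' : 0 < L -> smooth1 f -> smooth1 g -> smooth1 f' -> smooth1 g' ->
  (forall t, 0 <= t <= L -> f t < g t) ->
  smooth_map (region L f g) (canon_xi L f g L' f' g').
Proof.
  intros HL Hf Hg Hf' Hg' Hfg. exists (Ux f g). split; [|split; [|split]].
  - apply Ux_open; auto.
  - intros [t s] [H1 H2]. unfold Ux. simpl in *. specialize (Hfg t H1). lra.
  - rewrite xi_fst. apply Cinf2_den. apply Ux_open; auto. apply wf_e1; lra.
  - rewrite xi_snd. apply Cinf2_den. apply Ux_open; auto. apply wf_e2; auto; lra.
Qed.

Lemma atan_small x d d0 : Rabs (atan x) < d -> d <= atan d0 -> Rabs x < d0.
Proof.
  intros H Hd. apply Rabs_lt_between in H. apply Rabs_lt_between. split.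
  - destruct (Rle_lt_dec x (- d0)) as [Hx|Hx]; auto. exfalso.
    assert (atan x <= atan (- d0)).
    { destruct (Req_dec x (-d0)) as [->|Hn]; [lra|]. left. apply atan_increasing. lra. }
    rewrite atan_opp in H0. lra.
  - destruct (Rle_lt_dec d0 x) as [Hx|Hx]; auto. exfalso.
    assert (atan d0 <= atan x).
    { destruct (Req_dec x d0) as [->|Hn]; [lra|]. left. apply atan_increasing. lra. }
    lra.
Qed.

Lemma mvt_bound h L c x y : smooth1 h -> (forall t, 0 <= t <= L -> Rabs (Derive h t) <= c) ->
  0 <= x <= L -> 0 <= y <= L -> Rabs (h x - h y) <= c * Rabs (x - y).
Proof.
  intros Hs Hd Hx Hy.
  destruct (MVT_gen h y x (Derive h)) as [z [Hz E]].
  - intros z _. apply Derive_correct. apply smooth1_ex_derive; auto.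
  - intros z _. apply continuity_pt_filterlim. apply smooth1_cont; auto.
  - rewrite E. rewrite Rabs_mult. apply Rmult_le_compat_r. apply Rabs_pos.
    apply Hd. split.
    + apply Rle_trans with (Rmin y x); [apply Rmin_glb; lra | lra].
    + apply Rle_trans with (Rmax y x); [lra | apply Rmax_lub; lra].
Qed.

Definition side (d d0 K L V : R) (f g : R -> R) : Prop :=
  0 < d /\ d <= d0 /\ d <= atan d0 /\ d0 <= 1/100 /\ 0 < K /\
  smooth1 f /\ smooth1 g /\ (forall t, 0 <= t <= L -> f t < g t) /\
  nearly_circular_rect d K L f g /\ 1 / d < V /\
  (forall t, 0 <= t <= L -> - d < (g t - f t) - V < d).

Section Side.
Variables (d d0 K L V : R) (f g : R -> R).
Hypothesis HS : side d d0 K L V f g.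

Lemma side_L : K <= L /\ 0 < L.
Proof. destruct HS as (?&?&?&?&?&?&?&?&[HK _]&_). lra. Qed.

Lemma side_V : 1 < d * V /\ 100 <= V.
Proof.
  destruct HS as (Hd&Hd0&_&Hd1&_&_&_&_&_&HV&_).
  assert (1 < d * V).
  { apply (Rmult_lt_compat_l d) in HV; auto. unfold Rdiv in HV. rewrite Rmult_1_l, Rinv_r in HV; lra. }
  split; auto. nra.
Qed.

Lemma side_d : 0 < d /\ d <= d0 /\ d0 <= 1/100 /\ 0 < K.
Proof. destruct HS as (?&?&?&?&?&_). auto. Qed.

Lemma side_fg t : 0 <= t <= L -> f t < g t /\ - d < (g t - f t) - V < d.
Proof. destruct HS as (?&?&?&?&?&?&?&H&_&_&H'). auto. Qed.

Lemma side_sm : smooth1 f /\ smooth1 g.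
Proof. destruct HS as (?&?&?&?&?&?&?&_). auto. Qed.

Lemma arc_var h : nearly_circular_arc d L h -> smooth1 h ->
  (forall x y, 0 <= x <= L -> 0 <= y <= L -> Rabs (h x - h y) <= d) /\
  (forall x y, 0 <= x <= L -> 0 <= y <= L -> Rabs (h x - h y) <= d0 * Rabs (x - y)) /\
  (exists c, forall t, 0 <= t <= L -> c <= h t <= c + d).
Proof.
  intros [[c [ht [Hht Hb]]] Ha] Hs. destruct HS as (Hd&Hd0&Hat&_).
  split; [|split].
  - intros x y Hx Hy. pose proof (Hb x Hx). pose proof (Hb y Hy).
    apply Rabs_le. lra.
  - intros x y Hx Hy. apply (mvt_bound h L); auto. intros t Ht. left.
    apply (atan_small _ d); auto. specialize (Ha t Ht).
    replace (PI / 2 - (PI / 2 - atan (Derive h t))) with (atan (Derive h t)) in Ha by ring. auto.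
  - exists c. intros t Ht. specialize (Hb t Ht). lra.
Qed.

Lemma side_f :
  (forall x y, 0 <= x <= L -> 0 <= y <= L -> Rabs (f x - f y) <= d) /\
  (forall x y, 0 <= x <= L -> 0 <= y <= L -> Rabs (f x - f y) <= d0 * Rabs (x - y)) /\
  (exists c, forall t, 0 <= t <= L -> c <= f t <= c + d).
Proof.
  apply arc_var. destruct HS as (?&?&?&?&?&?&?&?&[_ [H _]]&_). auto. apply side_sm.
Qed.

Lemma side_g :
  (forall x y, 0 <= x <= L -> 0 <= y <= L -> Rabs (g x - g y) <= d) /\
  (forall x y, 0 <= x <= L -> 0 <= y <= L -> Rabs (g x - g y) <= d0 * Rabs (x - y)) /\
  (exists c, forall t, 0 <= t <= L -> c <= g t <= c + d).
Proof.
  apply arc_var. destruct HS as (?&?&?&?&?&?&?&?&[_ [_ H]]&_). auto. apply side_sm.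
Qed.

End Side.

Lemma clamp01_0 x : x <= 0 -> clamp01 x = 0.
Proof. intros H. unfold clamp01. rewrite (Rabs_left1 x) by lra. rewrite (Rabs_left1 (x-1)) by lra. field. Qed.

Lemma clamp01_1 x : 1 <= x -> clamp01 x = 1.
Proof. intros H. unfold clamp01. rewrite (Rabs_right x) by lra. rewrite (Rabs_right (x-1)) by lra. field. Qed.

Lemma cont_c k s : continuous (fun s => clamp01 (3 * s - k)) s.
Proof.
  apply (continuous_comp (fun s => 3 * s - k) clamp01). 2: apply clamp01_cont.
  apply (continuous_minus (fun s => 3 * s) (fun _ => k)). 2: apply continuous_const.
  apply (continuous_mult (fun _ => 3) (fun s => s)). apply continuous_const. apply continuous_id.
Qed.

Lemma cont_lin (a b : R) (c : R -> R) s : continuous c s -> continuous (fun s => a + c s * b) s.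
Proof.
  intros H. apply (continuous_plus (fun _ => a) (fun s => c s * b)). apply continuous_const.
  apply (continuous_mult c (fun _ => b)); auto. apply continuous_const.
Qed.

Lemma cont_add (u v : R -> R) s : continuous u s -> continuous v s -> continuous (fun s => u s + v s) s.
Proof. intros. apply (continuous_plus u v); auto. Qed.

Section Three.
Variables (d d0 K L V : R) (f g : R -> R).
Hypothesis HS : side d d0 K L V f g.

Lemma three_path P Q : region L f g P -> region L f g Q ->
  path_le (region L f g) P Q (eucl P Q + 4 * d).
Proof.
  destruct (side_f _ _ _ _ _ _ _ HS) as (_&_&[cf Hcf]).
  destruct (side_g _ _ _ _ _ _ _ HS) as (_&_&[cg Hcg]).
  destruct (side_d _ _ _ _ _ _ _ HS) as (Hd&Hdd0&Hd0&HK).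
  destruct (side_V _ _ _ _ _ _ _ HS) as (HdV&HV).
  destruct (side_L _ _ _ _ _ _ _ HS) as (HKL&HL).
  assert (Hlohi : cf + d <= cg).
  { assert (H0 : 0 <= 0 <= L) by lra. destruct (side_fg _ _ _ _ _ _ _ HS 0 H0).
    specialize (Hcf 0 H0); specialize (Hcg 0 H0). lra. }
  set (lo := cf + d) in *. set (hi := cg) in *.
  assert (Hband : forall t th, 0 <= t <= L -> lo <= th <= hi -> region L f g (t, th)).
  { intros t th Ht Hth. split; simpl; auto. specialize (Hcf t Ht); specialize (Hcg t Ht). unfold lo, hi in *. lra. }
  set (cb := fun th => Rmax lo (Rmin hi th)).
  assert (Hcb : forall th, lo <= cb th <= hi).
  { intros th. unfold cb. split. apply Rmax_l. apply Rmax_lub. lra. apply Rmin_l. }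
  assert (Hcbd : forall t th, region L f g (t, th) -> Rabs (cb th - th) <= d).
  { intros t th [Ht Hth]. simpl in *. specialize (Hcf t Ht); specialize (Hcg t Ht).
    unfold cb, Rmax, Rmin. apply Rabs_le.
    destruct (Rle_dec hi th); destruct (Rle_dec lo hi); destruct (Rle_dec lo th); unfold lo, hi in *; lra. }
  intros HP HQ. destruct P as [t1 th1], Q as [t2 th2].
  set (a1 := cb th1). set (a2 := cb th2).
  pose proof (Hcb th1) as Ha1. pose proof (Hcb th2) as Ha2. fold a1 a2 in Ha1, Ha2.
  pose proof (Hcbd _ _ HP) as Hd1. pose proof (Hcbd _ _ HQ) as Hd2. fold a1 a2 in Hd1, Hd2.
  set (c1 := fun s => clamp01 (3 * s - 0)).
  set (c2 := fun s => clamp01 (3 * s - 1)).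
  set (c3 := fun s => clamp01 (3 * s - 2)).
  set (gam := fun s => (t1 + c2 s * (t2 - t1), th1 + c1 s * (a1 - th1) + c2 s * (a2 - a1) + c3 s * (th2 - a2))).
  set (A := Rabs (a1 - th1)). set (B := n2 (t2 - t1) (a2 - a1)). set (C := Rabs (th2 - a2)).
  set (ell := fun s => c1 s * A + c2 s * B + c3 s * C).
  assert (Hc1 := fun s => clamp01_range (3 * s - 0)). assert (Hc2 := fun s => clamp01_range (3 * s - 1)).
  assert (Hc3 := fun s => clamp01_range (3 * s - 2)).
  assert (Hm : forall k x y, x <= y -> clamp01 (3 * x - k) <= clamp01 (3 * y - k)).
  { intros k x y H. apply clamp01_mono. lra. }
  destruct HP as [Ht1 Hth1]. destruct HQ as [Ht2 Hth2]. simpl in *.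
  assert (HA : 0 <= A) by apply Rabs_pos. assert (HB : 0 <= B) by apply n2_ge0. assert (HC : 0 <= C) by apply Rabs_pos.
  exists gam. split; [|split; [|split; [|split]]].
  - intros s. apply cont_pair.
    + apply cont_lin. apply cont_c.
    + apply cont_add. apply cont_add. apply cont_lin. apply cont_c. 
      apply (continuous_mult c2 (fun _ => a2 - a1)). apply cont_c. apply continuous_const.
      apply (continuous_mult c3 (fun _ => th2 - a2)). apply cont_c. apply continuous_const.
  - unfold gam, c1, c2, c3. rewrite !clamp01_0 by lra. f_equal; ring.
  - unfold gam, c1, c2, c3. rewrite !clamp01_1 by lra. f_equal; ring.
  - intros s Hs. unfold gam.
    destruct (Rle_dec s (1/3)).
    + unfold c2, c3. rewrite !clamp01_0 by lra. specialize (Hc1 s). fold (c1 s) in Hc1.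
      specialize (Hcf t1 Ht1); specialize (Hcg t1 Ht1).
      split; simpl. lra. replace (t1 + 0 * (t2 - t1)) with t1 by ring. split; nra.
    + destruct (Rle_dec s (2/3)).
      * unfold c1, c3. rewrite clamp01_1 by lra. rewrite clamp01_0 by lra.
        specialize (Hc2 s). fold (c2 s) in Hc2. apply Hband; simpl; split; nra.
      * unfold c1, c2. rewrite !clamp01_1 by lra. specialize (Hc3 s). fold (c3 s) in Hc3.
        specialize (Hcf t2 Ht2); specialize (Hcg t2 Ht2).
        split; simpl. lra. replace (t1 + 1 * (t2 - t1)) with t2 by ring. split; nra.
  - intros l Hsl Hfl.
    eapply Rle_trans. apply (poly_len_tele gam ell); auto.
    + intros x y Hx Hxy Hy. rewrite eucl_n2. unfold gam, ell. simpl.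
      rewrite <- n2_opp.
      set (k1 := c1 y - c1 x). set (k2 := c2 y - c2 x). set (k3 := c3 y - c3 x).
      assert (0 <= k1) by (unfold k1, c1; apply Rge_le, Rge_minus, Rle_ge, Hm; auto).
      assert (0 <= k2) by (unfold k2, c2; apply Rge_le, Rge_minus, Rle_ge, Hm; auto).
      assert (0 <= k3) by (unfold k3, c3; apply Rge_le, Rge_minus, Rle_ge, Hm; auto).
      replace (- (t1 + c2 x * (t2 - t1) - (t1 + c2 y * (t2 - t1)))) with (0 + (k2 * (t2 - t1) + 0)) by (unfold k2; ring).
      replace (- (th1 + c1 x * (a1 - th1) + c2 x * (a2 - a1) + c3 x * (th2 - a2) -
           (th1 + c1 y * (a1 - th1) + c2 y * (a2 - a1) + c3 y * (th2 - a2))))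
        with (k1 * (a1 - th1) + (k2 * (a2 - a1) + k3 * (th2 - a2))) by (unfold k1, k2, k3; ring).
      eapply Rle_trans. apply n2_tri. eapply Rle_trans. apply Rplus_le_compat_l. apply n2_tri.
      rewrite !n2_0l. rewrite n2_scale by auto. rewrite !Rabs_mult, (Rabs_right k1), (Rabs_right k3) by lra.
      unfold A, B, C, k1, k2, k3. lra.
    + intros x y Hx Hxy Hy. unfold ell.
      pose proof (Hm 0 x y Hxy). pose proof (Hm 1 x y Hxy). pose proof (Hm 2 x y Hxy).
      fold (c1 x) (c1 y) (c2 x) (c2 y) (c3 x) (c3 y) in *. nra.
    + unfold ell, c1, c2, c3. rewrite !clamp01_1 by lra. rewrite !clamp01_0 by lra.
      assert (B <= eucl (t1, th1) (t2, th2) + 2 * d).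
      { unfold B. rewrite eucl_n2. simpl.
        assert (E : n2 (t1 - t2) (th1 - th2) = n2 (t2 - t1) (th2 - th1)) by (rewrite <- n2_opp; f_equal; ring).
        rewrite E. eapply Rle_trans. apply (n2_add_err (t2 - t1) (th2 - th1)).
        replace (t2 - t1 - (t2 - t1)) with 0 by ring. rewrite Rabs_R0.
        replace (a2 - a1 - (th2 - th1)) with ((a2 - th2) + - (a1 - th1)) by ring.
        pose proof (Rabs_triang (a2 - th2) (- (a1 - th1))) as HT. rewrite Rabs_Ropp in HT. lra. }
      unfold A, C. pose proof (Rabs_minus_sym th2 a2). lra.
Qed.

End Three.

Lemma div_le x y D : 0 < D -> x <= y * D -> x / D <= y.
Proof.
  intros HD H. unfold Rdiv. replace y with (y * D * / D) by (field; lra).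
  apply Rmult_le_compat_r. left; apply Rinv_0_lt_compat; auto. auto.
Qed.

Lemma abs_div x D : 0 < D -> Rabs (x / D) = Rabs x / D.
Proof.
  intros HD. unfold Rdiv. rewrite Rabs_mult, Rabs_inv, (Rabs_right D) by lra. reflexivity.
Qed.

Lemma key_u u1 D1 D2 N1 N2 a b : 0 < D1 -> 0 < D2 -> 0 <= u1 <= D1 -> 0 <= N1 ->
  Rabs (N2 - N1) <= a -> Rabs (D2 - D1) <= b ->
  Rabs (u1 * (N2 / D2 - N1 / D1)) <= (a * D1 + N1 * b) / D2.
Proof.
  intros H1 H2 Hu HN Ha Hb.
  replace (u1 * (N2 / D2 - N1 / D1)) with ((u1 / D1) * (((N2 - N1) * D1 - N1 * (D2 - D1)) / D2))
    by (field; split; lra).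
  rewrite Rabs_mult, !abs_div by lra. rewrite (Rabs_right u1) by lra.
  assert (Hq : u1 / D1 <= 1) by (apply div_le; lra).
  assert (Hq0 : 0 <= u1 / D1) by (unfold Rdiv; apply Rmult_le_pos; [lra| left; apply Rinv_0_lt_compat; lra]).
  assert (Hn : Rabs ((N2 - N1) * D1 - N1 * (D2 - D1)) <= a * D1 + N1 * b).
  { unfold Rminus at 1. eapply Rle_trans. apply Rabs_triang. rewrite Rabs_Ropp, !Rabs_mult.
    rewrite (Rabs_right D1), (Rabs_right N1) by lra.
    pose proof (Rabs_pos (N2 - N1)); pose proof (Rabs_pos (D2 - D1)). timeout 20 nra. }
  assert (0 <= Rabs ((N2 - N1) * D1 - N1 * (D2 - D1)) / D2).
  { unfold Rdiv. apply Rmult_le_pos. apply Rabs_pos. left; apply Rinv_0_lt_compat; lra. }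
  assert (Rabs ((N2 - N1) * D1 - N1 * (D2 - D1)) / D2 <= (a * D1 + N1 * b) / D2).
  { unfold Rdiv. apply Rmult_le_compat_r. left; apply Rinv_0_lt_compat; lra. auto. }
  timeout 20 nra.
Qed.

Lemma frac_le x y a b : 0 <= x <= y -> 0 < a <= b -> x / b <= y / a.
Proof.
  intros Hx Ha. unfold Rdiv. apply Rmult_le_compat; try lra.
  left; apply Rinv_0_lt_compat; lra. apply Rinv_le_contravar; lra.
Qed.

Lemma add_est d K V V' D1 D2 N1 N2 u1 u2 F F' :
  0 < d -> d <= 1/100 -> 1 < d * V -> d * (K + 1) <= 1 -> 0 < K ->
  - K / 2 < V - V' < K / 2 ->
  V - d < D1 < V + d -> V - d < D2 < V + d ->
  V' - d < N1 < V' + d -> V' - d < N2 < V' + d ->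
  0 <= u1 <= D1 -> 0 <= u2 <= D2 ->
  Rabs (N2 - N1) <= 2 * d -> Rabs (D2 - D1) <= 2 * d ->
  Rabs F <= d -> Rabs F' <= d ->
  Rabs ((F' + u2 * (N2 / D2) - u1 * (N1 / D1)) - (F + (u2 - u1)))
    <= K / 2 + 12 * d + 2 * K * d ^ 2 + 8 * d ^ 3.
Proof.
  intros Hd Hd1 HdV HdK HK HVV HD1 HD2 HN1 HN2 Hu1 Hu2 HNN HDD HF HF'.
  assert (HV100 : 100 < V) by timeout 20 nra. assert (HVK : K + 1 < V) by timeout 20 nra. assert (Hdd : d * d <= 1/2) by timeout 20 nra. assert (Hinv : 2 * d * (V - d) >= 1) by lra.
  assert (HD1n : D1 <> 0) by lra. assert (HD2n : D2 <> 0) by lra. assert (HVn : V - d <> 0) by lra.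
  replace ((F' + u2 * (N2 / D2) - u1 * (N1 / D1)) - (F + (u2 - u1)))
    with (F' + - F + ((u2 - u1) * ((N2 - D2) / D2) + u1 * (N2 / D2 - N1 / D1))) by (field; repeat split; auto).
  eapply Rle_trans. apply Rabs_triang. eapply Rle_trans. apply Rplus_le_compat_r. apply Rabs_triang.
  rewrite Rabs_Ropp.
  eapply Rle_trans. apply Rplus_le_compat_l. apply Rabs_triang.
  assert (H1 : Rabs (u1 * (N2 / D2 - N1 / D1)) <= 8 * d).
  { eapply Rle_trans. apply (key_u u1 D1 D2 N1 N2 (2*d) (2*d)); auto; lra.
    assert (D1 <= 2 * D2) by lra. assert (N1 <= 2 * D2) by lra.
    apply div_le. lra. timeout 20 nra. }
  assert (H2 : Rabs ((u2 - u1) * ((N2 - D2) / D2)) <= K / 2 + 2 * d + 2 * K * d ^ 2 + 8 * d ^ 3).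
  { rewrite Rabs_mult, abs_div by lra.
    assert (Hu : Rabs (u2 - u1) <= V + d) by (apply Rabs_le; lra).
    assert (Hn : Rabs (N2 - D2) <= K / 2 + 2 * d) by (apply Rabs_le; lra).
    assert (Hq : Rabs (N2 - D2) / D2 <= (K / 2 + 2 * d) / (V - d)).
    { apply frac_le. pose proof (Rabs_pos (N2 - D2)). lra. lra. }
    assert (Hq0 : 0 <= Rabs (N2 - D2) / D2).
    { unfold Rdiv. apply Rmult_le_pos. apply Rabs_pos. left; apply Rinv_0_lt_compat; lra. }
    assert (Hw : (V + d) * ((K / 2 + 2 * d) / (V - d)) <= K / 2 + 2 * d + 2 * K * d ^ 2 + 8 * d ^ 3).
    { replace ((V + d) * ((K / 2 + 2 * d) / (V - d))) with ((K/2 + 2*d) + (K/2+2*d) * (2 * d / (V - d)))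
        by (field; repeat split; auto).
      assert (Hx : 2 * d / (V - d) <= 4 * d ^ 2).
      { apply div_le. lra. assert (2*d*(2*d*(V-d)) >= 2*d*1) by (apply Rmult_ge_compat_l; lra). lra. }
      assert ((K/2+2*d) * (2*d/(V-d)) <= (K/2+2*d)*(4*d^2)) by (apply Rmult_le_compat_l; lra).
      lra. }
    assert (Rabs (u2 - u1) * (Rabs (N2 - D2) / D2) <= (V + d) * ((K / 2 + 2 * d) / (V - d))).
    { apply Rmult_le_compat; auto. apply Rabs_pos. }
    lra. }
  lra.
Qed.

Lemma mult_est d0 d K V V' D1 D2 N1 N2 u1 u2 F F' lam dt :
  0 < d -> d <= d0 -> d0 <= 1/100 -> 1 < d * V -> d * (K + 1) <= 1 -> 0 < K ->
  - K / 2 < V - V' < K / 2 ->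
  V - d < D1 < V + d -> V - d < D2 < V + d ->
  V' - d < N1 < V' + d -> V' - d < N2 < V' + d ->
  0 <= u1 <= D1 -> 0 <= lam <= 2 ->
  Rabs (N2 - N1) <= 2 * d0 * lam * Rabs dt -> Rabs (D2 - D1) <= 2 * d0 * Rabs dt ->
  Rabs F <= d0 * Rabs dt -> Rabs F' <= d0 * lam * Rabs dt ->
  Rabs ((F' + u2 * (N2 / D2) - u1 * (N1 / D1)) - (N2 / D2) * (F + (u2 - u1)))
    <= 16 * d0 * Rabs dt /\ 0 <= N2 / D2 <= 1 + d * K + 4 * d ^ 2.
Proof.
  intros Hd Hdd0 Hd1 HdV HdK HK HVV HD1 HD2 HN1 HN2 Hu1 Hlam HNN HDD HF HF'.
  assert (HV100 : 100 < V) by timeout 20 nra. assert (HVK : K + 1 < V) by timeout 20 nra. assert (Hdd : d * d <= 1/2) by timeout 20 nra. assert (Hinv : 2 * d * (V - d) >= 1) by lra.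
  assert (HD1n : D1 <> 0) by lra. assert (HD2n : D2 <> 0) by lra. assert (HVn : V - d <> 0) by lra.
  assert (Hr : 0 <= N2 / D2 <= 2).
  { split. unfold Rdiv; apply Rmult_le_pos; [lra| left; apply Rinv_0_lt_compat; lra].
    apply div_le; timeout 20 nra. }
  pose proof (Rabs_pos dt).
  split.
  - replace ((F' + u2 * (N2 / D2) - u1 * (N1 / D1)) - (N2 / D2) * (F + (u2 - u1)))
      with (F' + (- ((N2 / D2) * F) + u1 * (N2 / D2 - N1 / D1))) by (field; repeat split; auto).
    eapply Rle_trans. apply Rabs_triang. eapply Rle_trans. apply Rplus_le_compat_l. apply Rabs_triang.
    rewrite Rabs_Ropp, Rabs_mult, (Rabs_right (N2 / D2)) by lra.
    assert (H1 : Rabs (u1 * (N2 / D2 - N1 / D1)) <= 12 * d0 * Rabs dt).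
    { eapply Rle_trans. apply (key_u u1 D1 D2 N1 N2 (2*d0*lam*Rabs dt) (2*d0*Rabs dt)); auto; lra.
      assert (D1 <= 2 * D2) by lra. assert (N1 <= 2 * D2) by lra.
      apply div_le. lra.
      assert (lam*D1 <= 4*D2) by (apply Rle_trans with (2 * D1); [apply Rmult_le_compat_r; lra | lra]).
      assert (0 <= d0*Rabs dt) by (apply Rmult_le_pos; lra).
      assert (d0*Rabs dt*(lam*D1) <= d0*Rabs dt*(4*D2)) by (apply Rmult_le_compat_l; lra).
      assert (d0*Rabs dt*N1 <= d0*Rabs dt*(2*D2)) by (apply Rmult_le_compat_l; lra).
      lra. }
    assert (0 <= d0*Rabs dt) by (apply Rmult_le_pos; lra).
    assert (d0*Rabs dt*lam <= d0*Rabs dt*2) by (apply Rmult_le_compat_l; lra).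
    assert (N2/D2 * Rabs F <= 2 * (d0*Rabs dt)) by (apply Rmult_le_compat; try lra; apply Rabs_pos).
    lra.
  - split. lra.
    assert (N2 / D2 <= (V' + d) / (V - d)).
    { apply frac_le; lra. }
    assert ((V' + d) / (V - d) <= 1 + d * K + 4 * d ^ 2).
    { apply div_le. lra.
      assert ((K/2) * (2*d*(V-d)) >= (K/2) * 1) by (apply Rmult_ge_compat_l; lra).
      assert ((2*d) * (2*d*(V-d)) >= (2*d) * 1) by (apply Rmult_ge_compat_l; lra).
      lra. }
    lra.
Qed.

Lemma norm_lemma lam r mu c x y Y : 0 <= lam <= mu -> 0 <= r <= mu -> 0 <= c ->
  Rabs (Y - r * y) <= c * Rabs x -> n2 (lam * x) Y <= (mu + c) * n2 x y.
Proof.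
  intros Hl Hr Hc He.
  replace (lam * x) with (lam * x + 0) by ring. replace Y with (r * y + (Y - r * y)) by ring.
  eapply Rle_trans. apply n2_tri. rewrite n2_0l.
  assert (n2 (lam * x) (r * y) <= mu * n2 x y).
  { apply n2_le_of_sq. pose proof (n2_ge0 x y). nra.
    replace (mu * n2 x y * (mu * n2 x y)) with (mu * mu * (n2 x y * n2 x y)) by ring.
    rewrite n2_sq. assert (lam * lam <= mu * mu) by nra. assert (r * r <= mu * mu) by nra.
    assert (0 <= x^2) by apply pow2_ge_0. assert (0 <= y^2) by apply pow2_ge_0. nra. }
  destruct (n2_abs_le x y) as [Hx _].
  assert (c * Rabs x <= c * n2 x y) by (apply Rmult_le_compat_l; auto). lra.
Qed.

Lemma eucl_n2' p q : eucl p q = n2 (fst q - fst p) (snd q - snd p).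
Proof. rewrite eucl_n2, <- n2_opp. f_equal; ring. Qed.

Section Pair.
Variables (d d0 K L V L' V' : R) (f g f' g' : R -> R).
Hypothesis HS : side d d0 K L V f g.
Hypothesis HS' : side d d0 K L' V' f' g'.
Hypothesis HLL : - d < L - L' < d.
Hypothesis HVV : - K / 2 < V - V' < K / 2.
Hypothesis HdK : d0 * (K + 1) <= 1.
Hypothesis HdK2 : d0 <= K / 100.

Let xi := canon_xi L f g L' f' g'.

Lemma s_range t : 0 <= t <= L -> 0 <= t * L' / L <= L'.
Proof.
  intros Ht. destruct (side_L _ _ _ _ _ _ _ HS). destruct (side_L _ _ _ _ _ _ _ HS').
  split. unfold Rdiv. apply Rmult_le_pos. apply Rmult_le_pos; lra. left; apply Rinv_0_lt_compat; lra.
  apply div_le. lra. nra.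
Qed.

Lemma xi_region p : region L f g p -> region L' f' g' (xi p).
Proof.
  intros [Ht Hth]. destruct p as [t th]. simpl in *. unfold xi, canon_xi. simpl.
  pose proof (s_range t Ht) as Hs. split; simpl; auto.
  set (s := t * L' / L) in *.
  destruct (side_fg _ _ _ _ _ _ _ HS t Ht) as [Hfg _].
  destruct (side_fg _ _ _ _ _ _ _ HS' s Hs) as [Hfg' _].
  assert (0 <= (th - f t) / (g t - f t) <= 1).
  { split. unfold Rdiv. apply Rmult_le_pos. lra. left; apply Rinv_0_lt_compat; lra.
    apply div_le; lra. }
  replace ((th - f t) * (g' s - f' s) / (g t - f t)) with ((th - f t) / (g t - f t) * (g' s - f' s))
    by (field; lra).
  split; nra.
Qed.

Lemma xi_inv p : region L f g p -> canon_xi L' f' g' L f g (xi p) = p.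
Proof.
  intros [Ht Hth]. destruct p as [t th]. simpl in *. unfold xi, canon_xi. simpl.
  destruct (side_L _ _ _ _ _ _ _ HS). destruct (side_L _ _ _ _ _ _ _ HS').
  pose proof (s_range t Ht) as Hs.
  destruct (side_fg _ _ _ _ _ _ _ HS t Ht) as [Hfg _].
  destruct (side_fg _ _ _ _ _ _ _ HS' _ Hs) as [Hfg' _].
  assert (E : t * L' / L * L / L' = t) by (field; lra).
  rewrite E. f_equal. field. lra.
Qed.

Lemma pair_setup a b : region L f g a -> region L f g b ->
  let t1 := fst a in let t2 := fst b in let th1 := snd a in let th2 := snd b in
  let s1 := t1 * L' / L in let s2 := t2 * L' / L in
  fst (xi b) - fst (xi a) = (L' / L) * (t2 - t1) /\
  snd (xi b) - snd (xi a) =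
    (f' s2 - f' s1) + (th2 - f t2) * ((g' s2 - f' s2) / (g t2 - f t2))
      - (th1 - f t1) * ((g' s1 - f' s1) / (g t1 - f t1)) /\
  snd b - snd a = (f t2 - f t1) + ((th2 - f t2) - (th1 - f t1)).
Proof.
  intros Ha Hb. simpl. unfold xi, canon_xi. simpl. repeat split; unfold Rdiv; ring.
Qed.

Lemma add_bound a b : region L f g a -> region L f g b ->
  eucl (xi a) (xi b) <= eucl a b + d + (K / 2 + 12 * d + 2 * K * d ^ 2 + 8 * d ^ 3).
Proof.
  intros Ha Hb. destruct (pair_setup a b Ha Hb) as (E1 & E2 & E3).
  rewrite !eucl_n2'. rewrite E1, E2, E3. clear E1 E2 E3.
  destruct a as [t1 th1], b as [t2 th2]. destruct Ha as [Ht1 Hth1], Hb as [Ht2 Hth2]. simpl in *.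
  destruct (side_L _ _ _ _ _ _ _ HS). destruct (side_L _ _ _ _ _ _ _ HS').
  destruct (side_d _ _ _ _ _ _ _ HS) as (Hd & Hdd0 & Hd1 & HK).
  destruct (side_V _ _ _ _ _ _ _ HS) as (HdV & _).
  assert (Ht : Rabs (L' / L * (t2 - t1) - (t2 - t1)) <= d).
  { replace (L' / L * (t2 - t1) - (t2 - t1)) with ((t2 - t1) * ((L' - L) / L)) by (field; lra).
    rewrite Rabs_mult, abs_div by lra.
    assert (Rabs (t2 - t1) <= L) by (apply Rabs_le; lra).
    assert (Rabs (L' - L) / L <= d / L) by (apply frac_le; [split; [apply Rabs_pos| apply Rabs_le; lra]|lra]).
    assert (Rabs (t2 - t1) * (Rabs (L' - L) / L) <= L * (d / L)) by
      (apply Rmult_le_compat; auto; try apply Rabs_pos; unfold Rdiv; apply Rmult_le_pos; [apply Rabs_pos| left; apply Rinv_0_lt_compat; lra]).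
    replace (L * (d / L)) with d in * by (field; lra). lra. }
  pose proof (s_range t1 Ht1) as Hs1. pose proof (s_range t2 Ht2) as Hs2.
  destruct (side_fg _ _ _ _ _ _ _ HS t1 Ht1) as [Hfg1 HD1].
  destruct (side_fg _ _ _ _ _ _ _ HS t2 Ht2) as [Hfg2 HD2].
  destruct (side_fg _ _ _ _ _ _ _ HS' _ Hs1) as [Hfg1' HN1].
  destruct (side_fg _ _ _ _ _ _ _ HS' _ Hs2) as [Hfg2' HN2].
  destruct (side_f _ _ _ _ _ _ _ HS) as (Hf1 & _). destruct (side_g _ _ _ _ _ _ _ HS) as (Hg1 & _).
  destruct (side_f _ _ _ _ _ _ _ HS') as (Hf1' & _). destruct (side_g _ _ _ _ _ _ _ HS') as (Hg1' & _).
  eapply Rle_trans. apply (n2_add_err (t2 - t1) (f t2 - f t1 + (th2 - f t2 - (th1 - f t1)))).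
  match goal with |- _ + _ + Rabs ?X <= _ => assert (Hth : Rabs X <=
                  K / 2 + 12 * d + 2 * K * d ^ 2 + 8 * d ^ 3) end.
  { apply (add_est d K V V'); try lra.
    - nra.
    - replace (g' (t2 * L' / L) - f' (t2 * L' / L) - (g' (t1 * L' / L) - f' (t1 * L' / L)))
        with ((g' (t2 * L' / L) - g' (t1 * L' / L)) + - (f' (t2 * L' / L) - f' (t1 * L' / L))) by ring.
      eapply Rle_trans. apply Rabs_triang. rewrite Rabs_Ropp.
      pose proof (Hf1' _ _ Hs2 Hs1). pose proof (Hg1' _ _ Hs2 Hs1). lra.
    - replace (g t2 - f t2 - (g t1 - f t1)) with ((g t2 - g t1) + - (f t2 - f t1)) by ring.
      eapply Rle_trans. apply Rabs_triang. rewrite Rabs_Ropp.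
      pose proof (Hf1 _ _ Ht2 Ht1). pose proof (Hg1 _ _ Ht2 Ht1). lra.
    - apply Hf1; auto.
    - apply Hf1'; auto. }
  lra.
Qed.

Lemma mult_bound a b : region L f g a -> region L f g b ->
  eucl (xi a) (xi b) <= (1 + d / K + d * K + 4 * d ^ 2 + 16 * d0) * eucl a b.
Proof.
  intros Ha Hb. destruct (pair_setup a b Ha Hb) as (E1 & E2 & E3).
  rewrite !eucl_n2'. rewrite E1, E2, E3. clear E1 E2 E3.
  destruct a as [t1 th1], b as [t2 th2]. destruct Ha as [Ht1 Hth1], Hb as [Ht2 Hth2]. simpl in *.
  destruct (side_L _ _ _ _ _ _ _ HS). destruct (side_L _ _ _ _ _ _ _ HS').
  destruct (side_d _ _ _ _ _ _ _ HS) as (Hd & Hdd0 & Hd1 & HK).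
  destruct (side_V _ _ _ _ _ _ _ HS) as (HdV & _).
  pose proof (s_range t1 Ht1) as Hs1. pose proof (s_range t2 Ht2) as Hs2.
  destruct (side_fg _ _ _ _ _ _ _ HS t1 Ht1) as [Hfg1 HD1].
  destruct (side_fg _ _ _ _ _ _ _ HS t2 Ht2) as [Hfg2 HD2].
  destruct (side_fg _ _ _ _ _ _ _ HS' _ Hs1) as [Hfg1' HN1].
  destruct (side_fg _ _ _ _ _ _ _ HS' _ Hs2) as [Hfg2' HN2].
  destruct (side_f _ _ _ _ _ _ _ HS) as (_ & Hf2 & _). destruct (side_g _ _ _ _ _ _ _ HS) as (_ & Hg2 & _).
  destruct (side_f _ _ _ _ _ _ _ HS') as (_ & Hf2' & _). destruct (side_g _ _ _ _ _ _ _ HS') as (_ & Hg2' & _).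
  set (lam := L' / L) in *.
  assert (Hlam : 0 <= lam <= 1 + d / K).
  { unfold lam. split. unfold Rdiv. apply Rmult_le_pos. lra. left; apply Rinv_0_lt_compat; lra.
    apply Rle_trans with ((L + d) / L). apply frac_le; lra.
    replace ((L + d) / L) with (1 + d / L) by (field; lra).
    assert (d / L <= d / K) by (apply frac_le; lra). lra. }
  assert (HdK0 : d / K <= 1) by (apply div_le; lra).
  assert (Hss : forall x y, Rabs (x * L' / L - y * L' / L) = lam * Rabs (x - y)).
  { intros x y. replace (x * L' / L - y * L' / L) with (lam * (x - y)) by (unfold lam; field; lra).
    rewrite Rabs_mult, Rabs_right by lra. auto. }
  destruct (mult_est d0 d K V V' (g t1 - f t1) (g t2 - f t2) (g' (t1 * L' / L) - f' (t1 * L' / L))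
     (g' (t2 * L' / L) - f' (t2 * L' / L)) (th1 - f t1) (th2 - f t2) (f t2 - f t1)
     (f' (t2 * L' / L) - f' (t1 * L' / L)) lam (t2 - t1)) as [Hm Hr]; try lra.
  - nra.
  - replace (g' (t2 * L' / L) - f' (t2 * L' / L) - (g' (t1 * L' / L) - f' (t1 * L' / L)))
      with ((g' (t2 * L' / L) - g' (t1 * L' / L)) + - (f' (t2 * L' / L) - f' (t1 * L' / L))) by ring.
    eapply Rle_trans. apply Rabs_triang. rewrite Rabs_Ropp.
    pose proof (Hf2' _ _ Hs2 Hs1). pose proof (Hg2' _ _ Hs2 Hs1). rewrite Hss in *. lra.
  - replace (g t2 - f t2 - (g t1 - f t1)) with ((g t2 - g t1) + - (f t2 - f t1)) by ring.
    eapply Rle_trans. apply Rabs_triang. rewrite Rabs_Ropp.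
    pose proof (Hf2 _ _ Ht2 Ht1). pose proof (Hg2 _ _ Ht2 Ht1). lra.
  - apply Hf2; auto.
  - pose proof (Hf2' _ _ Hs2 Hs1). rewrite Hss in *. lra.
  - assert (0 <= d * K) by (apply Rmult_le_pos; lra). assert (0 <= d^2) by apply pow2_ge_0.
    assert (0 <= d / K) by (unfold Rdiv; apply Rmult_le_pos; [lra| left; apply Rinv_0_lt_compat; lra]).
    apply (norm_lemma lam ((g' (t2 * L' / L) - f' (t2 * L' / L)) / (g t2 - f t2))); lra.
Qed.

End Pair.

Lemma poly_len_map (phi : R * R -> R * R) (gam : R -> R * R) (Om : R * R -> Prop) c :
  0 <= c -> (forall s, 0 <= s <= 1 -> Om (gam s)) ->
  (forall x y, Om x -> Om y -> eucl (phi x) (phi y) <= c * eucl x y) ->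
  forall l, List.Forall (fun s => 0 <= s <= 1) l ->
  poly_len (fun s => phi (gam (clamp01 s))) l <= c * poly_len gam l.
Proof.
  intros Hc Hin Hl.
  assert (Aux : forall l a, List.Forall (fun s => 0 <= s <= 1) (a :: l) ->
     poly_len (fun s => phi (gam (clamp01 s))) (a :: l) <= c * poly_len gam (a :: l)).
  { induction l as [|b l IH]; intros a Hf.
    - simpl. lra.
    - inversion Hf as [|? ? Ha Hf1]; subst. inversion Hf1 as [|? ? Hb Hf2]; subst.
      change (poly_len (fun s => phi (gam (clamp01 s))) (a :: b :: l)) with
        (eucl (phi (gam (clamp01 a))) (phi (gam (clamp01 b))) + poly_len (fun s => phi (gam (clamp01 s))) (b :: l)).
      change (poly_len gam (a :: b :: l)) with (eucl (gam a) (gam b) + poly_len gam (b :: l)).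
      rewrite (clamp01_id a Ha), (clamp01_id b Hb).
      specialize (IH b Hf1). pose proof (Hl _ _ (Hin a Ha) (Hin b Hb)). lra. }
  intros [|a l] Hf. simpl. lra. apply Aux; auto.
Qed.

Lemma path_transfer (Om Om' : R * R -> Prop) (phi : R * R -> R * R) c p q M :
  0 <= c -> (forall x, Om x -> Om' (phi x)) -> (forall x, Om x -> continuous phi x) ->
  (forall x y, Om x -> Om y -> eucl (phi x) (phi y) <= c * eucl x y) ->
  path_le Om p q M -> path_le Om' (phi p) (phi q) (c * M).
Proof.
  intros Hc Hmap Hcont Hlip (gam & Hg & H0 & H1 & Hin & Hlen).
  exists (fun s => phi (gam (clamp01 s))). split; [|split; [|split; [|split]]].
  - intros s. apply (continuous_comp (fun s => gam (clamp01 s)) phi).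
    apply (continuous_comp clamp01 gam). apply clamp01_cont. apply Hg.
    apply Hcont. apply Hin. apply clamp01_range.
  - simpl. rewrite clamp01_id by lra. now rewrite H0.
  - simpl. rewrite clamp01_id by lra. now rewrite H1.
  - intros s Hs. apply Hmap. apply Hin. apply clamp01_range.
  - intros l Hs Hf. eapply Rle_trans. apply (poly_len_map phi gam Om c); auto.
    apply Rmult_le_compat_l; auto.
Qed.

Lemma pdist_transfer (Om Om' : R * R -> Prop) (phi : R * R -> R * R) c p q :
  0 < c -> (forall x, Om x -> Om' (phi x)) -> (forall x, Om x -> continuous phi x) ->
  (forall x y, Om x -> Om y -> eucl (phi x) (phi y) <= c * eucl x y) ->
  (exists M, path_le Om p q M) ->
  pdist Om' (phi p) (phi q) <= c * pdist Om p q.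
Proof.
  intros Hc Hmap Hcont Hlip [M0 HM0].
  assert (H : pdist Om' (phi p) (phi q) / c <= pdist Om p q).
  { apply pdist_ge. exists M0; auto. intros M HM.
    apply div_le. lra. rewrite Rmult_comm. apply pdist_le.
    apply (path_transfer Om); auto; lra. }
  assert (pdist Om' (phi p) (phi q) = c * (pdist Om' (phi p) (phi q) / c)) by (field; lra).
  rewrite H0. apply Rmult_le_compat_l; lra.
Qed.

Lemma eucl_pos p q : p <> q -> 0 < eucl p q.
Proof.
  intros H. unfold eucl. apply sqrt_lt_R0.
  destruct p as [a b], q as [c d]. simpl.
  destruct (Req_dec a c) as [Ha|Ha].
  - destruct (Req_dec b d) as [Hb|Hb]. exfalso; apply H; subst; auto.
    assert (0 < (b - d) ^ 2) by (apply pow2_gt_0; lra). pose proof (pow2_ge_0 (a - c)). lra.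
  - assert (0 < (a - c) ^ 2) by (apply pow2_gt_0; lra). pose proof (pow2_ge_0 (b - d)). lra.
Qed.

Section Final.
Variables (d d0 K L V L' V' eps : R) (f g f' g' : R -> R).
Hypothesis HS : side d d0 K L V f g.
Hypothesis HS' : side d d0 K L' V' f' g'.
Hypothesis HLL : - d < L - L' < d.
Hypothesis HVV : - K / 2 < V - V' < K / 2.
Hypothesis HdK : d0 * (K + 1) <= 1.
Hypothesis HdK2 : d0 <= K / 100.
Hypothesis Heps : 0 < eps.
Hypothesis Hm : d / K + d * K + 4 * d ^ 2 + 16 * d0 <= eps / 2.

Lemma side_cont x : region L f g x -> continuous (canon_xi L f g L' f' g') x.
Proof.
  intros [Ht Hth]. destruct (side_sm _ _ _ _ _ _ _ HS). destruct (side_sm _ _ _ _ _ _ _ HS').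
  destruct (side_L _ _ _ _ _ _ _ HS). apply xi_cont; auto. lra.
  unfold Ux. destruct (side_fg _ _ _ _ _ _ _ HS _ Ht). lra.
Qed.

Lemma mult_dir p q : region L f g p -> region L f g q ->
  pdist (region L' f' g') (canon_xi L f g L' f' g' p) (canon_xi L f g L' f' g' q)
   <= (1 + d / K + d * K + 4 * d ^ 2 + 16 * d0) * pdist (region L f g) p q.
Proof.
  intros Hp Hq. apply pdist_transfer.
  - destruct (side_d _ _ _ _ _ _ _ HS) as (Hd&Hdd0&_&HK).
    assert (0 <= d / K) by (unfold Rdiv; apply Rmult_le_pos; [lra| left; apply Rinv_0_lt_compat; lra]).
    assert (0 <= d * K) by (apply Rmult_le_pos; lra). pose proof (pow2_ge_0 d). lra.
  - intros x Hx. apply (xi_region d d0 K L V L' V' f g f' g'); auto.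
  - apply side_cont.
  - intros x y Hx Hy. apply (mult_bound d d0 K L V L' V' f g f' g'); auto.
  - eexists. apply (three_path d d0 K L V f g); auto.
Qed.

Lemma add_dir p q : region L f g p -> region L f g q ->
  pdist (region L' f' g') (canon_xi L f g L' f' g' p) (canon_xi L f g L' f' g' q)
   < pdist (region L f g) p q + K.
Proof.
  intros Hp Hq.
  assert (Hp' : region L' f' g' (canon_xi L f g L' f' g' p)) by (apply (xi_region d d0 K L V L' V' f g f' g'); auto).
  assert (Hq' : region L' f' g' (canon_xi L f g L' f' g' q)) by (apply (xi_region d d0 K L V L' V' f g f' g'); auto).
  pose proof (pdist_le _ _ _ _ (three_path d d0 K L' V' f' g' HS' _ _ Hp' Hq')).
  assert (eucl (canon_xi L f g L' f' g' p) (canon_xi L f g L' f' g' q) <= eucl p q + d + (K / 2 + 12 * d + 2 * K * d ^ 2 + 8 * d ^ 3))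
    by (apply (add_bound d d0 K L V L' V' f g f' g'); auto).
  pose proof (pdist_ge_eucl (region L f g) p q (ex_intro _ _ (three_path d d0 K L V f g HS _ _ Hp Hq))).
  destruct (side_d _ _ _ _ _ _ _ HS) as (Hd&Hdd0&Hd1&HK).
  assert (d <= K / 100) by lra. assert (d <= 1/100) by lra.
  assert (d * d <= d * (1/100)) by (apply Rmult_le_compat_l; lra).
  assert (K * (d * d) <= K * (d * (1/100))) by (apply Rmult_le_compat_l; lra).
  assert (d * d * d <= (K/100) * (1/100) * (1/100)).
  { apply Rmult_le_compat; try nra. }
  nra.
Qed.

End Final.

Ltac rmin := first [ apply Rle_refl | eapply Rle_trans; [apply Rmin_l | rmin] | eapply Rle_trans; [apply Rmin_r | rmin] ].

Theorem lemma4p2 :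
  forall eps K : R, 0 < eps -> 0 < K ->
  exists delta : R, 0 < delta /\
  forall (L L' : R) (f g f' g' : R -> R) (V V' : R),
    smooth1 f -> smooth1 g -> smooth1 f' -> smooth1 g' ->
    (forall t, 0 <= t <= L -> f t < g t) ->
    (forall t, 0 <= t <= L' -> f' t < g' t) ->
    nearly_circular_rect delta K L f g ->
    nearly_circular_rect delta K L' f' g' ->
    - delta < L - L' < delta ->
    1 / delta < V -> 1 / delta < V' -> - K / 2 < V - V' < K / 2 ->
    (forall t, 0 <= t <= L -> - delta < (g t - f t) - V < delta) ->
    (forall t, 0 <= t <= L' -> - delta < (g' t - f' t) - V' < delta) ->
    smooth_map (region L f g) (canon_xi L f g L' f' g') /\
    bilip (1 + eps) K (region L f g) (region L' f' g') (canon_xi L f g L' f' g').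
Proof.
  intros eps K Heps HK.
  set (d0 := Rmin (Rmin (Rmin (1/100) (1/(K+1))) (Rmin (K/100) (eps*K/8))) (Rmin (eps/(8*(K+1))) (eps/80))).
  assert (Hd0a : d0 <= 1/100 /\ d0 <= 1/(K+1) /\ d0 <= K/100 /\ d0 <= eps*K/8 /\ d0 <= eps/(8*(K+1)) /\ d0 <= eps/80).
  { unfold d0. repeat split; rmin. }
  assert (Hd0p : 0 < d0).
  { unfold d0. assert (0 < K + 1) by lra. assert (0 < 8 * (K+1)) by lra.
    repeat apply Rmin_glb_lt; unfold Rdiv; try apply Rmult_lt_0_compat; try apply Rinv_0_lt_compat; nra. }
  destruct Hd0a as (Ha1 & Ha2 & Ha3 & Ha4 & Ha5 & Ha6).
  assert (HdK : d0 * (K + 1) <= 1).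
  { apply Rle_trans with (1 / (K + 1) * (K + 1)). apply Rmult_le_compat_r; lra. right; field; lra. }
  assert (HdKe : d0 * (K + 1) <= eps / 8).
  { apply Rle_trans with (eps / (8 * (K + 1)) * (K + 1)). apply Rmult_le_compat_r; lra. right; field; lra. }
  assert (HdKe2 : d0 / K <= eps / 8).
  { apply div_le. lra. replace (eps / 8 * K) with (eps * K / 8) by field. lra. }
  assert (Hat : 0 < atan d0) by (rewrite <- atan_0; apply atan_increasing; lra).
  exists (Rmin d0 (atan d0)). split. apply Rmin_glb_lt; lra.
  set (d := Rmin d0 (atan d0)).
  assert (Hdd0 : d <= d0) by apply Rmin_l. assert (Hdat : d <= atan d0) by apply Rmin_r.
  assert (Hd : 0 < d) by (apply Rmin_glb_lt; lra).
  intros L L' f g f' g' V V' Hf Hg Hf' Hg' Hfg Hfg' HR HR' HLL HV HV' HVV HB HB'.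
  assert (HS : side d d0 K L V f g) by (unfold side; tauto).
  assert (HS' : side d d0 K L' V' f' g') by (unfold side; tauto).
  assert (HLL' : - d < L' - L < d) by lra.
  assert (HVV' : - K / 2 < V' - V < K / 2) by lra.
  assert (Hm : d / K + d * K + 4 * d ^ 2 + 16 * d0 <= eps / 2).
  { assert (d / K <= d0 / K) by (apply frac_le; lra).
    assert (d * K <= d0 * K) by (apply Rmult_le_compat_r; lra).
    assert (d ^ 2 <= d0 * (1/100)) by (simpl; rewrite Rmult_1_r; apply Rmult_le_compat; lra).
    lra. }
  set (c := 1 + d / K + d * K + 4 * d ^ 2 + 16 * d0).
  assert (Hc : 1 <= c).
  { unfold c. assert (0 <= d / K) by (unfold Rdiv; apply Rmult_le_pos; [lra| left; apply Rinv_0_lt_compat; lra]).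
    assert (0 <= d * K) by (apply Rmult_le_pos; lra). pose proof (pow2_ge_0 d). lra. }
  assert (Hce : c <= 1 + eps / 2) by (unfold c; lra).
  destruct (side_L _ _ _ _ _ _ _ HS) as [_ HL].
  split.
  { apply xi_smooth; auto. }
  split.
  - intros p q Hp Hq Hne.
    assert (Hp' : region L' f' g' (canon_xi L f g L' f' g' p)) by (apply (xi_region d d0 K L V L' V' f g f' g'); auto).
    assert (Hq' : region L' f' g' (canon_xi L f g L' f' g' q)) by (apply (xi_region d d0 K L V L' V' f g f' g'); auto).
    assert (H1 := mult_dir d d0 K L V L' V' f g f' g').
    specialize (H1 ltac:(auto) ltac:(auto) ltac:(auto) ltac:(auto) ltac:(auto) ltac:(auto) p q Hp Hq).
    assert (H2 := mult_dir d d0 K L' V' L V f' g' f g).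
    specialize (H2 ltac:(auto) ltac:(auto) ltac:(auto) ltac:(auto) ltac:(auto) ltac:(auto) _ _ Hp' Hq').
    rewrite (xi_inv d d0 K L V L' V' f g f' g') in H2 by auto.
    rewrite (xi_inv d d0 K L V L' V' f g f' g') in H2 by auto.
    fold c in H1, H2.
    pose proof (pdist_ge_eucl (region L f g) p q (ex_intro _ _ (three_path d d0 K L V f g HS _ _ Hp Hq))).
    pose proof (eucl_pos p q Hne).
    set (P := pdist (region L f g) p q) in *.
    set (P' := pdist (region L' f' g') (canon_xi L f g L' f' g' p) (canon_xi L f g L' f' g' q)) in *.
    assert (HP' : 0 < P') by nra.
    split.
    + assert (P < (1 + eps) * P') by nra.
      apply Rmult_lt_reg_l with (1 + eps). lra.
      rewrite <- Rmult_assoc, Rinv_r, Rmult_1_l by lra. lra.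
    + nra.
  - intros p q Hp Hq.
    assert (Hp' : region L' f' g' (canon_xi L f g L' f' g' p)) by (apply (xi_region d d0 K L V L' V' f g f' g'); auto).
    assert (Hq' : region L' f' g' (canon_xi L f g L' f' g' q)) by (apply (xi_region d d0 K L V L' V' f g f' g'); auto).
    assert (H1 := add_dir d d0 K L V L' V' f g f' g').
    specialize (H1 ltac:(auto) ltac:(auto) ltac:(auto) ltac:(auto) ltac:(auto) ltac:(auto) p q Hp Hq).
    assert (H2 := add_dir d d0 K L' V' L V f' g' f g).
    specialize (H2 ltac:(auto) ltac:(auto) ltac:(auto) ltac:(auto) ltac:(auto) ltac:(auto) _ _ Hp' Hq').
    rewrite (xi_inv d d0 K L V L' V' f g f' g') in H2 by auto.
    rewrite (xi_inv d d0 K L V L' V' f g f' g') in H2 by auto.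
    split; lra.
Qed.
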